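(* Let $\Gamma^*$ be a closed subgroup of $Sym(\mathbb Q\times\mathbb Z)$ such that the group of shifts is contained in $\Gamma^*$ and $\Gamma^*\subseteq\Gamma({A_1}_1)$. If $\Gamma^*$ initiates the full group $Sym(\mathbb Q)$, then $\Gamma^*=\Gamma(+1)$ or $\Gamma^*=\Gamma({A_1}_1)$.
   Context: $\mathbb Q\times\mathbb Z$ denotes the set $\mathbb Q\times\mathbb Z$ with the lexicographic order. $Sym(X)$ is the group of all permutations of $X$ with the topology of pointwise convergence. A vertical is a set $\{r\}\times\mathbb Z$. A permutation $g$ is systemic if it maps every vertical onto a vertical; it initiates the permutation $h$ of $\mathbb Q$ with $g(\{a\}\times\mathbb Z)=\{h(a)\}\times\mathbb Z$; a group of systemic permutations initiates the set of permutations initiated by its elements. A systemic permutation is positive if it preserves the order on each vertical and negative if it reverses the order on each vertical. A shift is a positive permutation initiating an increasing map of $\mathbb Q$. $\Gamma(+1)$ is the group of all positive permutations (the automorphism group of the successor relation) and $\Gamma({A_1}_1)$ is the group of all positive or negative permutations (the automorphism group of the 1-codirection relation ${A_1}_1(x,y,z,t)\iff x-y=z-t\wedge|x-y|=1$). *)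

(* Defs.v *)
From HB Require Import structures.
From mathcomp Require Import all_boot all_order all_algebra.
Set Implicit Arguments. Unset Strict Implicit. Unset Printing Implicit Defensive.
Import Order.TTheory GRing.Theory Num.Theory.
Local Open Scope ring_scope.

(* The underlying set Q x Z (lexicographic order is not needed below). *)
Definition QZ : Type := (rat * int)%type.

Definition is_perm (T : Type) (f : T -> T) : Prop := bijective f.

Definition is_subgroup (T : Type) (G : (T -> T) -> Prop) : Prop :=
  [/\ (forall f, G f -> is_perm f),
      G id,
      (forall f g, G f -> G g -> G (f \o g)) &
      (forall f g, G f -> cancel f g -> cancel g f -> G g)].

(* G is closed in Sym(T) for the topology of pointwise convergence:
   every permutation all of whose finite restrictions are matched by
   elements of G belongs to G. *)
Definition is_closed_perm_set (T : eqType) (G : (T -> T) -> Prop) : Prop :=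
  forall h : T -> T, is_perm h ->
    (forall F : seq T, exists g, G g /\ (forall x, x \in F -> g x = h x)) ->
    G h.

Definition systemic (g : QZ -> QZ) : Prop :=
  forall a : rat, exists b : rat,
    (forall z : int, (g (a, z)).1 = b) /\
    (forall z' : int, exists z : int, g (a, z) = (b, z')).

Definition initiates (g : QZ -> QZ) (h : rat -> rat) : Prop :=
  systemic g /\ forall (a : rat) (z : int), (g (a, z)).1 = h a.

Definition positive_perm (g : QZ -> QZ) : Prop :=
  systemic g /\ forall (a : rat) (z1 z2 : int), z1 < z2 -> (g (a, z1)).2 < (g (a, z2)).2.

Definition negative_perm (g : QZ -> QZ) : Prop :=
  systemic g /\ forall (a : rat) (z1 z2 : int), z1 < z2 -> (g (a, z2)).2 < (g (a, z1)).2.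

Definition shift (g : QZ -> QZ) : Prop :=
  is_perm g /\ positive_perm g /\
  exists h : rat -> rat, initiates g h /\ (forall a b : rat, a < b -> h a < h b).

Definition Gamma_plus1 (g : QZ -> QZ) : Prop := is_perm g /\ positive_perm g.

Definition Gamma_A11 (g : QZ -> QZ) : Prop :=
  is_perm g /\ (positive_perm g \/ negative_perm g).

(* Main.v *)
Require Import Defs.
From mathcomp Require Import all_boot all_order all_algebra.
From mathcomp Require Import zify ring lra.
From Stdlib Require Import Classical.
Set Implicit Arguments. Unset Strict Implicit. Unset Printing Implicit Defensive.
Import Order.TTheory GRing.Theory Num.Theory.
Local Open Scope ring_scope.

Definition PF (h : rat -> rat) (c : rat -> int) : QZ -> QZ := fun x => (h x.1, x.2 + c x.1).
Definition NF (h : rat -> rat) (c : rat -> int) : QZ -> QZ := fun x => (h x.1, c x.1 - x.2).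

Lemma incr_step (f : int -> int) :
  (forall z1 z2, z1 < z2 -> f z1 < f z2) -> (forall y, exists z, f z = y) ->
  forall z, f (z + 1) = f z + 1.
Proof.
move=> inc sur z; have [w fw] := sur (f z + 1).
have [hw|hw|hw] := ltgtP w (z+1).
- have [e|ne] := eqVneq w z; first by move: fw; rewrite e; lia.
  have : w < z by lia.
  move=> /inc; lia.
- have := inc _ _ hw; have := inc z (z+1) ltac:(lia); lia.
- by rewrite -hw.
Qed.

Lemma incr_transl (f : int -> int) :
  (forall z1 z2, z1 < z2 -> f z1 < f z2) -> (forall y, exists z, f z = y) ->
  forall z, f z = f 0 + z.
Proof.
move=> inc sur; have st := incr_step inc sur.
have L : forall (n : nat) z, f (z + n%:Z) = f z + n%:Z.
  elim=> [|n IH] z; first by rewrite !addr0.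
  have -> : z + n.+1%:Z = (z + n%:Z) + 1 by lia.
  rewrite st IH; lia.
case=> n; first by move: (L n 0); rewrite add0r.
rewrite NegzE.
have := L n.+1 (- n.+1%:Z); have -> : - n.+1%:Z + n.+1%:Z = 0 by lia.
by move=> ->; rewrite addrK.
Qed.

Lemma decr_transl (f : int -> int) :
  (forall z1 z2, z1 < z2 -> f z2 < f z1) -> (forall y, exists z, f z = y) ->
  forall z, f z = f 0 - z.
Proof.
move=> dec sur z.
have := @incr_transl (fun z => f (- z)) _ _ (- z).
rewrite opprK oppr0; apply.
- by move=> z1 z2 lt; apply: dec; rewrite ltrN2.
- by move=> y; have [w fw] := sur y; exists (- w); rewrite opprK.
Qed.

Lemma pos_form g : positive_perm g ->
  g =1 PF (fun a => (g (a,0)).1) (fun a => (g (a,0)).2).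
Proof.
case=> sys inc [a z]; have [b [Hb Hon]] := sys a.
have T := @incr_transl (fun z => (g (a,z)).2) (inc a).
rewrite /PF /=.
have -> : (g (a,0)).1 = (g (a,z)).1 by rewrite !Hb.
rewrite addrC -T; first by case: (g (a,z)).
by move=> y; have [w fw] := Hon y; exists w; rewrite fw.
Qed.

Lemma neg_form g : negative_perm g ->
  g =1 NF (fun a => (g (a,0)).1) (fun a => (g (a,0)).2).
Proof.
case=> sys dec [a z]; have [b [Hb Hon]] := sys a.
have T := @decr_transl (fun z => (g (a,z)).2) (dec a).
rewrite /NF /=.
have -> : (g (a,0)).1 = (g (a,z)).1 by rewrite !Hb.
rewrite -T; first by case: (g (a,z)).
by move=> y; have [w fw] := Hon y; exists w; rewrite fw.
Qed.

Lemma PF_bij h c : bijective h -> bijective (PF h c).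
Proof.
case=> hi hK hiK.
exists (PF hi (fun b => - c (hi b))) => [[a z]|[b w]]; rewrite /PF /=.
- by rewrite hK addrK.
- by rewrite hiK subrK.
Qed.

Lemma NF_bij h c : bijective h -> bijective (NF h c).
Proof.
case=> hi hK hiK.
exists (NF hi (fun b => c (hi b))) => [[a z]|[b w]]; rewrite /NF /=.
- by rewrite hK; congr pair; lia.
- by rewrite hiK; congr pair; lia.
Qed.

Lemma PF_bij_inv h c : bijective (PF h c) -> bijective h.
Proof.
case=> p pK Kp.
exists (fun b => (p (b,0)).1) => [a|b].
- have := pK (a, - c a); rewrite /PF /= addNr => ->; done.
- exact: (congr1 fst (Kp (b,0))).
Qed.

Lemma NF_bij_inv h c : bijective (NF h c) -> bijective h.
Proof.
case=> p pK Kp.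
exists (fun b => (p (b,0)).1) => [a|b].
- have := pK (a, c a); rewrite /NF /= subrr => ->; done.
- exact: (congr1 fst (Kp (b,0))).
Qed.

Lemma PF_pos h c : positive_perm (PF h c).
Proof.
split.
- move=> a; exists (h a); split=> // z'; exists (z' - c a).
  by rewrite /PF /= subrK.
- by move=> a z1 z2 lt; rewrite /PF /= ltrD2r.
Qed.

Lemma PF_init h c : initiates (PF h c) h.
Proof. by split; [case: (PF_pos h c)|]. Qed.

Lemma PF_shift h c : bijective h -> (forall a b, a < b -> h a < h b) ->
  shift (PF h c).
Proof.
move=> hb hi; split; first exact: PF_bij.
split; first exact: PF_pos.
by exists h; split => //; exact: PF_init.
Qed.

Definition HG (Gs : (QZ -> QZ) -> Prop) :=
  [/\ is_subgroup Gs, is_closed_perm_set Gs, (forall g, shift g -> Gs g),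
      (forall g, Gs g -> Gamma_A11 g) &
      (forall h : rat -> rat, is_perm h -> exists g, Gs g /\ initiates g h)].


Lemma Gs_ext Gs f g : HG Gs -> Gs f -> f =1 g -> Gs g.
Proof.
case=> [[perm _ _ _] cl _ _ _] Gf e; apply: cl; first exact: (@eq_bij _ _ f (perm f Gf) g e).
by move=> F; exists f; split=> // x _; exact: e.
Qed.

Lemma Gs_comp Gs f g : HG Gs -> Gs f -> Gs g -> Gs (f \o g).
Proof. by case=> [[_ _ c _] _ _ _ _]; apply: c. Qed.

Definition Sh Gs h := exists c, Gs (PF h c).
Definition Nh Gs h := exists c, Gs (NF h c).

Lemma Gs_PFid Gs d : HG Gs -> Gs (PF id d).
Proof.
case=> _ _ sh _ _; apply: sh; apply: PF_shift => //.
by exists id.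
Qed.

Lemma S_all Gs h : HG Gs -> Sh Gs h -> forall c', Gs (PF h c').
Proof.
move=> H [c Gc] c'.
apply: (Gs_ext H (Gs_comp H Gc (Gs_PFid (fun a => c' a - c a) H))).
by move=> [a z]; rewrite /PF /=; congr pair; lia.
Qed.

Lemma N_all Gs h : HG Gs -> Nh Gs h -> forall c', Gs (NF h c').
Proof.
move=> H [c Gc] c'.
apply: (Gs_ext H (Gs_comp H Gc (Gs_PFid (fun a => c a - c' a) H))).
by move=> [a z]; rewrite /PF /NF /=; congr pair; lia.
Qed.

Lemma S_ext Gs h h' : HG Gs -> h =1 h' -> Sh Gs h -> Sh Gs h'.
Proof.
move=> H e [c Gc]; exists c; apply: (Gs_ext H Gc).
by move=> [a z]; rewrite /PF /= e.
Qed.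

Lemma N_ext Gs h h' : HG Gs -> h =1 h' -> Nh Gs h -> Nh Gs h'.
Proof.
move=> H e [c Gc]; exists c; apply: (Gs_ext H Gc).
by move=> [a z]; rewrite /NF /= e.
Qed.

Lemma S_comp Gs h h' : HG Gs -> Sh Gs h -> Sh Gs h' -> Sh Gs (h \o h').
Proof.
move=> H [c Gc] [c' Gc']; exists (fun a => c' a + c (h' a)).
apply: (Gs_ext H (Gs_comp H Gc Gc')).
by move=> [a z]; rewrite /PF /=; congr pair; lia.
Qed.

Lemma NN_S Gs h h' : HG Gs -> Nh Gs h -> Nh Gs h' -> Sh Gs (h \o h').
Proof.
move=> H [c Gc] [c' Gc']; exists (fun a => c (h' a) - c' a).
apply: (Gs_ext H (Gs_comp H Gc Gc')).
by move=> [a z]; rewrite /PF /NF /=; congr pair; lia.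
Qed.

Lemma SN_N Gs h h' : HG Gs -> Sh Gs h -> Nh Gs h' -> Nh Gs (h \o h').
Proof.
move=> H [c Gc] [c' Gc']; exists (fun a => c' a + c (h' a)).
apply: (Gs_ext H (Gs_comp H Gc Gc')).
by move=> [a z]; rewrite /PF /NF /=; congr pair; lia.
Qed.

Lemma F1 Gs h : HG Gs -> bijective h -> Sh Gs h \/ Nh Gs h.
Proof.
move=> H hb; have H' := H; case: H' => _ _ _ inG ini.
have [g [Gg [_ ig]]] := ini h hb.
have [_ [gp|gn]] := inG g Gg.
- left; exists (fun a => (g (a,0)).2); apply: (Gs_ext H Gg) => x.
  by rewrite (pos_form gp) /PF ig.
- right; exists (fun a => (g (a,0)).2); apply: (Gs_ext H Gg) => x.
  by rewrite (neg_form gn) /NF ig.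
Qed.

Lemma tr_bij (K : rat) : bijective (fun x => x + K).
Proof. by exists (fun x => x - K) => x; rewrite ?addrK ?subrK. Qed.

Lemma S_tr Gs K : HG Gs -> Sh Gs (fun x => x + K).
Proof.
case=> _ _ sh _ _; exists (fun _ => 0); apply: sh; apply: PF_shift.
- exact: tr_bij.
- by move=> a b ab; rewrite ltrD2r.
Qed.

Lemma in_bound (s : seq rat) x : x \in s ->
  - (\sum_(y <- s) `|y|) <= x /\ x <= \sum_(y <- s) `|y|.
Proof.
move=> xs; suff : `|x| <= \sum_(y <- s) `|y| by rewrite ler_norml => /andP.
elim: s xs => //= y s IH; rewrite inE big_cons => /orP[/eqP->|/IH le].
- by rewrite lerDl sumr_ge0.
- by apply: le_trans le _; rewrite lerDr.
Qed.

Lemma main_lemma Gs h : HG Gs -> bijective h -> Sh Gs h.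
Proof.
move=> H hb; have H' := H; case: H' => _ cl _ _ _.
exists (fun _ => 0); apply: cl; first exact: PF_bij.
move=> F; set A := map fst F.
suff [s [Ss sA]] : exists s, Sh Gs s /\ forall a, a \in A -> s a = h a.
  exists (PF s (fun _ => 0)); split; first exact: S_all.
  by move=> [a z] xF; rewrite /PF /= sA //; apply: (map_f fst xF).
case: (classic (exists v, bijective v /\ (forall a, a \in A -> v a = a) /\ ~ Sh Gs v)).
  move=> [v [vb [vA nS]]].
  have [Shh|Nhh] := F1 H hb; first by exists h.
  have [//|Nv] := F1 H vb.
  exists (h \o v); split; first exact: NN_S.
  by move=> a aA /=; rewrite vA.
move=> nE.
have allS : forall v, bijective v -> (forall a, a \in A -> v a = a) -> Sh Gs v.
  by move=> v vb vA; apply: NNPP => nS; apply: nE; exists v.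
exists h; split => //.
have hb' := hb; case: hb' => hi hK hiK.
set M := \sum_(y <- A ++ map h A) `|y|.
have bA : forall a, a \in A -> - M <= a /\ a <= M.
  by move=> a aA; apply: in_bound; rewrite mem_cat aA.
have bhA : forall a, a \in A -> - M <= h a /\ h a <= M.
  by move=> a aA; apply: in_bound; rewrite mem_cat (map_f h aA) orbT.
set K := 2 * M + 1.
set K' := 4 * M + 2.
pose w2 := fun x => if (x - K) \in A then h (x - K) else if hi x \in A then hi x + K else x.
have w2a : forall x, (x - K) \in A -> w2 x = h (x - K).
  by move=> x xA; rewrite /w2 xA.
have w2b : forall x, (x - K) \in A = false -> hi x \in A -> w2 x = hi x + K.
  by move=> x xA hA; rewrite /w2 xA hA.
have w2c : forall x, (x - K) \in A = false -> hi x \in A = false -> w2 x = x.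
  by move=> x xA hA; rewrite /w2 xA hA.
have w2inv : forall x, w2 (w2 x) = x.
  move=> x; case xA: (x - K \in A).
  - rewrite (w2a _ xA) w2b ?hK ?subrK //.
    apply/negbTE/negP => HA; have := bA _ HA; have := bhA _ xA; rewrite /K; lra.
  - case hA: (hi x \in A).
    + by rewrite (w2b _ xA hA) w2a addrK ?hA ?hiK.
    + by rewrite (w2c _ xA hA) (w2c _ xA hA).
have w2fix : forall a, a \in A -> w2 (a + K') = a + K'.
  move=> a aA; rewrite /w2.
  have -> : (a + K' - K \in A) = false.
    apply/negbTE/negP => HA; have := bA _ HA; have := bA _ aA; rewrite /K /K'; lra.
  have -> : (hi (a + K') \in A) = false.
    apply/negbTE/negP => HA; have := bhA _ HA; rewrite hiK; have := bA _ aA; rewrite /K'; lra.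
  done.
have Sv' : Sh Gs (fun x => w2 (x + K') - K').
  apply: allS.
  - exists (fun x => w2 (x + K') - K') => x; by rewrite subrK w2inv addrK.
  - by move=> a aA; rewrite w2fix // addrK.
have Sw2 : Sh Gs w2.
  apply: (S_ext H (h := (fun x => x + K') \o ((fun x => w2 (x + K') - K') \o (fun x => x + - K')))).
    by move=> x /=; rewrite subrK subrK.
  apply: (S_comp H (S_tr _ H)); apply: (S_comp H Sv' (S_tr _ H)).
have Sv : Sh Gs ((fun x => x + - K) \o (w2 \o h)).
  apply: allS.
  - apply: bij_comp; first exact: tr_bij.
    apply: bij_comp => //; by exists w2.
  - move=> a aA /=; rewrite /w2.
    have -> : (h a - K \in A) = false.
      apply/negbTE/negP => HA; have := bA _ HA; have := bhA _ aA; rewrite /K; lra.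
    by rewrite hK aA addrK.
apply: (S_ext H (h := (w2 \o (fun x => x + K)) \o ((fun x => x + - K) \o (w2 \o h)))).
  by move=> x /=; rewrite subrK w2inv.
apply: (S_comp H _ Sv); apply: (S_comp H Sw2 (S_tr _ H)).
Qed.

Theorem mainTheorem9 (Gs : (QZ -> QZ) -> Prop) :
  is_subgroup Gs ->
  is_closed_perm_set Gs ->
  (forall g, shift g -> Gs g) ->
  (forall g, Gs g -> Gamma_A11 g) ->
  (forall h : rat -> rat, is_perm h -> exists g, Gs g /\ initiates g h) ->
  (forall g, Gs g <-> Gamma_plus1 g) \/ (forall g, Gs g <-> Gamma_A11 g).
Proof.
move=> sub cl shG inG ini.
have H : HG Gs by split.
have Pin : forall p, Gamma_plus1 p -> Gs p.
  move=> p [pb pp]; have e := pos_form pp.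
  have hb := PF_bij_inv (eq_bij pb e).
  exact: (Gs_ext H (S_all H (main_lemma H hb) _) (fsym e)).
case: (classic (exists n, Gs n /\ negative_perm n)).
- move=> [n [Gn nn]]; right=> g; split; first exact: inG.
  move=> [gb [gp|gn]]; first exact: Pin.
  have [nb _] := inG n Gn.
  have e := neg_form nn.
  have kb := NF_bij_inv (eq_bij nb e).
  have Nk : Nh Gs (fun a => (n (a, 0)).1).
    by exists (fun a => (n (a,0)).2); apply: (Gs_ext H Gn e).
  have kb' := kb; case: kb' => ki kK kiK.
  have Ski : Sh Gs ki by apply: (main_lemma H); exists (fun a => (n (a, 0)).1).
  have Nid : Nh Gs id.
    by apply: (N_ext H _ (SN_N H Ski Nk)) => x /=; rewrite kK.
  have ge := neg_form gn.
  have hb := NF_bij_inv (eq_bij gb ge).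
  have Nh' := SN_N H (main_lemma H hb) Nid.
  exact: (Gs_ext H (N_all H (N_ext H (fun x => erefl) Nh') _) (fsym ge)).
- move=> nE; left=> g; split; last exact: Pin.
  move=> Gg; have [gb [gp|gn]] := inG _ Gg; first by split.
  by exfalso; apply: nE; exists g.
Qed.
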